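(* Let $(K,v)$ be an extremal valued field with nontrivial valuation, divisible value group $\Gamma$, valuation ring $\mathcal{O}_v$, maximal ideal $\mathfrak{m}_v$, and residue field $k$ which is not algebraically closed. Then there is no polynomial $f(Y,Z)\in\mathcal{O}_v[Y,Z]$ such that both (i) there are $\alpha_1,\dots,\alpha_m\in k$ such that for every $\alpha\in k\setminus\{\alpha_1,\dots,\alpha_m\}$ the equation $\bar f(\alpha,z)=0$ has no solution $z\in k$ (where $\bar f\in k[Y,Z]$ is the reduction of $f$ modulo $\mathfrak{m}_v$), and (ii) for every $\epsilon\in\mathfrak{m}_v$ the equation $f(\epsilon,Z)=0$ has a solution in $\mathcal{O}_v$.
   Context: $(K,v)$ with valuation ring $\mathcal{O}_v$ and value group $\Gamma$ (and $v(0)=\infty$) is extremal if for every $n\ge1$ and every $F\in K[X_1,\dots,X_n]$ the set $\{v(F(a_1,\dots,a_n)) : a_i\in\mathcal{O}_v\}\subseteq\Gamma\cup\{\infty\}$ has a maximal element. *)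

(* Defs.v *)
From HB Require Import structures.
From mathcomp Require Import all_boot all_order all_algebra.
Set Implicit Arguments. Unset Strict Implicit. Unset Printing Implicit Defensive.
Import Order.TTheory GRing.Theory Num.Theory.
Local Open Scope ring_scope.

Definition ordered_abelian_group (G : zmodType) (le : rel G) : Prop :=
  [/\ (forall x, le x x),
      (forall x y, le x y -> le y x -> x = y),
      (forall x y z, le x y -> le y z -> le x z),
      (forall x y, le x y || le y x) &
      (forall x y z, le x y -> le (x + z) (y + z))].

(* Values in G ∪ {∞}, with None = ∞. *)
Definition vle (G : zmodType) (le : rel G) (a b : option G) : bool :=
  match a, b with
  | _, None => true
  | None, Some _ => false
  | Some x, Some y => le x y
  end.

Definition vlt (G : zmodType) (le : rel G) (a b : option G) : bool :=
  vle le a b && (a != b).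

Definition vadd (G : zmodType) (a b : option G) : option G :=
  match a, b with
  | Some x, Some y => Some (x + y)
  | _, _ => None
  end.

Definition vmin (G : zmodType) (le : rel G) (a b : option G) : option G :=
  if vle le a b then a else b.

Definition is_valuation (K : fieldType) (G : zmodType) (le : rel G)
  (v : K -> option G) : Prop :=
  [/\ ordered_abelian_group le,
      (forall x, v x = None <-> x = 0),
      (forall x y, v (x * y) = vadd (v x) (v y)),
      (forall x y, vle le (vmin le (v x) (v y)) (v (x + y))) &
      (forall g, exists x, v x = Some g)].

Definition in_O (K : fieldType) (G : zmodType) (le : rel G)
  (v : K -> option G) (x : K) : Prop := vle le (Some 0) (v x).
Definition in_m (K : fieldType) (G : zmodType) (le : rel G)
  (v : K -> option G) (x : K) : Prop := vlt le (Some 0) (v x).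

Definition is_residue_map (K : fieldType) (G : zmodType) (le : rel G)
  (v : K -> option G) (k : fieldType) (res : K -> k) : Prop :=
  [/\ (forall x y, in_O le v x -> in_O le v y -> res (x + y) = res x + res y),
      (forall x y, in_O le v x -> in_O le v y -> res (x * y) = res x * res y),
      res 1 = 1,
      (forall x, in_O le v x -> (res x = 0 <-> in_m le v x)) &
      (forall c, exists2 x, in_O le v x & res x = c)].

(* Multivariate polynomials over K are represented by inversion-free
   formal ring terms (GRing.term) in the variables 'X_0, 'X_1, ... *)
Fixpoint inv_free (R : pzRingType) (t : GRing.term R) : bool :=
  match t with
  | GRing.Var _ | GRing.Const _ | GRing.NatConst _ => true
  | GRing.Add s u | GRing.Mul s u => inv_free s && inv_free u
  | GRing.Opp s | GRing.NatMul s _ | GRing.Exp s _ => inv_free s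
  | GRing.Inv _ => false
  end.

Definition extremal (K : fieldType) (G : zmodType) (le : rel G)
  (v : K -> option G) : Prop :=
  forall (n : nat) (F : GRing.term K), inv_free F ->
    exists a : seq K, [/\ size a = n, (forall x, x \in a -> in_O le v x) &
      forall b : seq K, size b = n -> (forall x, x \in b -> in_O le v x) ->
        vle le (v (GRing.eval b F)) (v (GRing.eval a F))].

(* Main.v *)
Require Import Defs.
From HB Require Import structures.
From mathcomp Require Import all_boot all_order all_algebra.
From Stdlib Require Import Classical.
Set Implicit Arguments. Unset Strict Implicit. Unset Printing Implicit Defensive.
Import Order.TTheory GRing.Theory Num.Theory.
Local Open Scope ring_scope.

Definition setting (K : fieldType) (G : zmodType) (le : rel G)
  (v : K -> option G) (k : fieldType) (res : K -> k) :=
  is_valuation le v /\ is_residue_map le v res.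

Lemma oag_of (K : fieldType) (G : zmodType) (le : rel G) (v : K -> option G) :
  is_valuation le v -> ordered_abelian_group le.
Proof. by case. Qed.

Lemma og_refl G le (H : @ordered_abelian_group G le) x : le x x.
Proof. by case: H => h _ _ _ _; apply: h. Qed.
Lemma og_anti G le (H : @ordered_abelian_group G le) x y : le x y -> le y x -> x = y.
Proof. by case: H => _ h _ _ _; apply: h. Qed.
Lemma og_trans G le (H : @ordered_abelian_group G le) x y z : le x y -> le y z -> le x z.
Proof. by case: H => _ _ h _ _; apply: h. Qed.
Lemma og_total G le (H : @ordered_abelian_group G le) x y : le x y || le y x.
Proof. by case: H => _ _ _ h _; apply: h. Qed.
Lemma og_addr G le (H : @ordered_abelian_group G le) x y z : le x y -> le (x + z) (y + z).
Proof. by case: H => _ _ _ _ h; apply: h. Qed.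
Lemma og_addl G le (H : @ordered_abelian_group G le) x y z : le x y -> le (z + x) (z + y).
Proof. by rewrite ![z + _]addrC; apply: og_addr. Qed.
Lemma og_add2 G le (H : @ordered_abelian_group G le) a b c d :
  le a b -> le c d -> le (a + c) (b + d).
Proof. move=> h1 h2; apply: (og_trans H (og_addr H c h1)); exact: og_addl. Qed.
Lemma og_addrK G le (H : @ordered_abelian_group G le) x y z : le (x + z) (y + z) -> le x y.
Proof. by move/(og_addr H (- z)); rewrite !addrK. Qed.
Lemma og_opp G le (H : @ordered_abelian_group G le) a b : le a b -> le (- b) (- a).
Proof.
move/(og_addr H (- a - b)).
by rewrite addrA subrr add0r addrCA subrr addr0.
Qed.
Lemma og_muln G le (H : @ordered_abelian_group G le) a b m :
  le a b -> le (a *+ m) (b *+ m).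
Proof.
move=> h; elim: m => [|m IH]; first by rewrite !mulr0n (og_refl H).
by rewrite !mulrS (og_add2 H).
Qed.
Lemma og_lt_muln G le (H : @ordered_abelian_group G le) a b m :
  ~~ le b a -> (0 < m)%N -> ~~ le (b *+ m) (a *+ m).
Proof.
move=> h; case: m => // m _; apply/negP => hm.
have hab : le a b by move: (og_total H a b); rewrite (negbTE h) orbF.
elim: m hm => [|m IH] hm; first by rewrite !mulr1n in hm; rewrite hm in h.
apply: IH; rewrite [b *+ _]mulrS [a *+ _]mulrS in hm.
have := og_trans H (og_addr H (b *+ m.+1) hab) hm.
by rewrite !(addrC _ (_ *+ _)) => /(og_addrK H).
Qed.


Lemma v0 (K : fieldType) (G : zmodType) (le : rel G) (v : K -> option G)
  (H : is_valuation le v) x : (v x = None) <-> (x = 0).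
Proof. by case: H => _ h _ _ _. Qed.
Lemma vM (K : fieldType) (G : zmodType) (le : rel G) (v : K -> option G)
  (H : is_valuation le v) x y : v (x * y) = vadd (v x) (v y).
Proof. by case: H => _ _ h _ _. Qed.
Lemma vD (K : fieldType) (G : zmodType) (le : rel G) (v : K -> option G)
  (H : is_valuation le v) x y : vle le (vmin le (v x) (v y)) (v (x + y)).
Proof. by case: H => _ _ _ h _. Qed.
Lemma vS (K : fieldType) (G : zmodType) (le : rel G) (v : K -> option G)
  (H : is_valuation le v) g : exists x, v x = Some g.
Proof. by case: H => _ _ _ _ h. Qed.

Lemma vSome (K : fieldType) (G : zmodType) (le : rel G) (v : K -> option G)
  (H : is_valuation le v) x : x != 0 -> exists g, v x = Some g.
Proof.
move=> nx; case e: (v x) => [g|]; first by exists g.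
by move/(v0 H): e => e; rewrite e eqxx in nx.
Qed.

Lemma v1 (K : fieldType) (G : zmodType) (le : rel G) (v : K -> option G)
  (H : is_valuation le v) : v 1 = Some 0.
Proof.
have := vM H 1 1; rewrite mulr1.
case: (vSome H (oner_neq0 K)) => g -> [] e; congr Some.
by apply: (@addrI _ g); rewrite addr0 -e.
Qed.

Lemma vV (K : fieldType) (G : zmodType) (le : rel G) (v : K -> option G)
  (H : is_valuation le v) x g : v x = Some g -> v x^-1 = Some (- g).
Proof.
move=> ex; have nx : x != 0 by apply/eqP => x0; move/(v0 H): x0; rewrite ex.
have := vM H x x^-1; rewrite mulfV // (v1 H) ex.
have nx' : x^-1 != 0 by rewrite invr_eq0.
case: (vSome H nx') => h -> /= [] e; congr Some.
by rewrite -[RHS]addr0 e addKr.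
Qed.

Definition uv (K : fieldType) (G : zmodType) (v : K -> option G) x := v x = Some 0.

Lemma O0 (K : fieldType) (G : zmodType) (le : rel G) (v : K -> option G)
  (H : is_valuation le v) : in_O le v 0.
Proof. by rewrite /in_O (proj2 (v0 H 0) erefl). Qed.

Lemma m0 (K : fieldType) (G : zmodType) (le : rel G) (v : K -> option G)
  (H : is_valuation le v) : in_m le v 0.
Proof. by rewrite /in_m /vlt (proj2 (v0 H 0) erefl). Qed.

Lemma O1 (K : fieldType) (G : zmodType) (le : rel G) (v : K -> option G)
  (H : is_valuation le v) : in_O le v 1.
Proof. by rewrite /in_O (v1 H) /= (og_refl (oag_of H)). Qed.

Lemma OM (K : fieldType) (G : zmodType) (le : rel G) (v : K -> option G)
  (H : is_valuation le v) x y : in_O le v x -> in_O le v y -> in_O le v (x * y).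
Proof.
rewrite /in_O (vM H); case: (v x) => [a|] //; case: (v y) => [b|] //= ha hb.
by rewrite -[0]addr0 (og_add2 (oag_of H)).
Qed.

Lemma vle_trans G le (H : @ordered_abelian_group G le) a b c :
  vle le a b -> vle le b c -> vle le a c.
Proof.
by case: a => [a|]; case: b => [b|]; case: c => [c|] //=; apply: og_trans.
Qed.

Lemma OD (K : fieldType) (G : zmodType) (le : rel G) (v : K -> option G)
  (H : is_valuation le v) x y : in_O le v x -> in_O le v y -> in_O le v (x + y).
Proof.
move=> hx hy; apply: (vle_trans (oag_of H) _ (vD H x y)).
by rewrite /vmin; case: ifP.
Qed.

Lemma og_2eq0 G le (H : @ordered_abelian_group G le) (g : G) : g + g = 0 -> g = 0.
Proof.
move=> e; case/orP: (og_total H 0 g) => h.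
  have := og_addr H g h; rewrite add0r e => h'; exact: (og_anti H h' h).
have := og_addr H g h; rewrite add0r e => h'; exact: (og_anti H h h').
Qed.

Lemma vN1 (K : fieldType) (G : zmodType) (le : rel G) (v : K -> option G)
  (H : is_valuation le v) : v (-1) = Some 0.
Proof.
have n1 : (-1 : K) != 0 by rewrite oppr_eq0 oner_neq0.
have := vM H (-1) (-1); rewrite mulrNN mulr1 (v1 H).
case: (vSome H n1) => g -> [] e; congr Some; apply: (og_2eq0 (oag_of H)); by rewrite -e.
Qed.

Lemma ON (K : fieldType) (G : zmodType) (le : rel G) (v : K -> option G)
  (H : is_valuation le v) x : in_O le v x -> in_O le v (- x).
Proof.
move=> hx; rewrite -mulN1r; apply: (OM H) => //.
by rewrite /in_O (vN1 H) /= (og_refl (oag_of H)).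
Qed.

Lemma OB (K : fieldType) (G : zmodType) (le : rel G) (v : K -> option G)
  (H : is_valuation le v) x y : in_O le v x -> in_O le v y -> in_O le v (x - y).
Proof. by move=> hx hy; apply: (OD H) => //; apply: (ON H). Qed.

Lemma OX (K : fieldType) (G : zmodType) (le : rel G) (v : K -> option G)
  (H : is_valuation le v) x n : in_O le v x -> in_O le v (x ^+ n).
Proof.
move=> hx; elim: n => [|n IH]; first by rewrite expr0; exact: (O1 H).
by rewrite exprS; apply: (OM H).
Qed.

Lemma mO (K : fieldType) (G : zmodType) (le : rel G) (v : K -> option G) x :
  in_m le v x -> in_O le v x.
Proof. by case/andP. Qed.

Lemma uvO (K : fieldType) (G : zmodType) (le : rel G) (v : K -> option G)
  (H : is_valuation le v) x : uv v x -> in_O le v x.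
Proof. by rewrite /uv /in_O => ->; rewrite /= (og_refl (oag_of H)). Qed.

Lemma uv_notm (K : fieldType) (G : zmodType) (le : rel G) (v : K -> option G) x :
  uv v x -> ~ in_m le v x.
Proof. by rewrite /uv /in_m /vlt => ->; rewrite eqxx andbF. Qed.

Lemma O_notm (K : fieldType) (G : zmodType) (le : rel G) (v : K -> option G) x :
  in_O le v x -> ~ in_m le v x -> uv v x.
Proof.
rewrite /in_O /in_m /vlt /uv => -> /=; case: (v x) => [g|] //= h.
by apply/eqP; rewrite eq_sym; apply/negP => /negP ne; apply: h.
Qed.

Lemma uv_neq0 (K : fieldType) (G : zmodType) (le : rel G) (v : K -> option G)
  (H : is_valuation le v) x : uv v x -> x != 0.
Proof. by rewrite /uv => e; apply/eqP => x0; move/(v0 H): x0; rewrite e. Qed.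

Lemma uvV (K : fieldType) (G : zmodType) (le : rel G) (v : K -> option G)
  (H : is_valuation le v) x : uv v x -> uv v x^-1.
Proof. by rewrite /uv => /(vV H) ->; rewrite oppr0. Qed.

Lemma uvM (K : fieldType) (G : zmodType) (le : rel G) (v : K -> option G)
  (H : is_valuation le v) x y : uv v x -> uv v y -> uv v (x * y).
Proof. by rewrite /uv (vM H) => -> ->; rewrite /= addr0. Qed.

Lemma vX (K : fieldType) (G : zmodType) (le : rel G) (v : K -> option G)
  (H : is_valuation le v) x g n : v x = Some g -> v (x ^+ n) = Some (g *+ n).
Proof.
move=> e; elim: n => [|n IH]; first by rewrite expr0 (v1 H) mulr0n.
by rewrite exprS (vM H) IH e /= mulrS.
Qed.

Lemma uvX (K : fieldType) (G : zmodType) (le : rel G) (v : K -> option G)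
  (H : is_valuation le v) x n : uv v x -> uv v (x ^+ n).
Proof. by rewrite /uv => /(vX H n) ->; rewrite mul0rn. Qed.

Lemma notO (K : fieldType) (G : zmodType) (le : rel G) (v : K -> option G)
  (H : is_valuation le v) x : ~ in_O le v x -> in_m le v x^-1.
Proof.
rewrite /in_O /in_m /vlt; case e: (v x) => [g|] //= h.
rewrite (vV H e) /=; have hg : le g 0.
  by case/orP: (og_total (oag_of H) 0 g) => // h0; exfalso; apply: h.
apply/andP; split; first by rewrite -oppr0 (og_opp (oag_of H)).
apply/eqP => -[] /eqP; rewrite eq_sym oppr_eq0 => /eqP g0.
by apply: h; rewrite g0 (og_refl (oag_of H)).
Qed.


Lemma resD (K : fieldType) (G : zmodType) (le : rel G) (v : K -> option G) (k : fieldType) (res : K -> k)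
  (R : is_residue_map le v res) x y : in_O le v x -> in_O le v y -> res (x + y) = res x + res y.
Proof. by case: R => h _ _ _ _; apply: h. Qed.
Lemma resM (K : fieldType) (G : zmodType) (le : rel G) (v : K -> option G) (k : fieldType) (res : K -> k)
  (R : is_residue_map le v res) x y : in_O le v x -> in_O le v y -> res (x * y) = res x * res y.
Proof. by case: R => _ h _ _ _; apply: h. Qed.
Lemma res1 (K : fieldType) (G : zmodType) (le : rel G) (v : K -> option G) (k : fieldType) (res : K -> k)
  (R : is_residue_map le v res) : res 1 = 1.
Proof. by case: R. Qed.
Lemma resm (K : fieldType) (G : zmodType) (le : rel G) (v : K -> option G) (k : fieldType) (res : K -> k)
  (R : is_residue_map le v res) x : in_O le v x -> (res x = 0 <-> in_m le v x).
Proof. by case: R => _ _ _ h _; apply: h. Qed.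
Lemma resS (K : fieldType) (G : zmodType) (le : rel G) (v : K -> option G) (k : fieldType) (res : K -> k)
  (R : is_residue_map le v res) c : exists2 x, in_O le v x & res x = c.
Proof. by case: R => _ _ _ _ h; apply: h. Qed.

Lemma res0 (K : fieldType) (G : zmodType) (le : rel G) (v : K -> option G) (k : fieldType) (res : K -> k)
  (S : setting le v res) : res 0 = 0.
Proof.
case: S => H R; have := resD R (O0 H) (O0 H); rewrite addr0 => e.
by apply: (@addrI _ (res 0)); rewrite addr0 -e.
Qed.

Lemma resN (K : fieldType) (G : zmodType) (le : rel G) (v : K -> option G) (k : fieldType) (res : K -> k)
  (S : setting le v res) x : in_O le v x -> res (- x) = - res x.
Proof.
move=> hx; case: (S) => H R; have := resD R hx (ON H hx); rewrite subrr (res0 S) => /eqP.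
by rewrite eq_sym addrC addr_eq0 => /eqP.
Qed.

Lemma resB (K : fieldType) (G : zmodType) (le : rel G) (v : K -> option G) (k : fieldType) (res : K -> k)
  (S : setting le v res) x y : in_O le v x -> in_O le v y -> res (x - y) = res x - res y.
Proof. by move=> hx hy; case: (S) => H R; rewrite (resD R) ?(resN S) //; apply: ON. Qed.

Lemma resX (K : fieldType) (G : zmodType) (le : rel G) (v : K -> option G) (k : fieldType) (res : K -> k)
  (S : setting le v res) x n : in_O le v x -> res (x ^+ n) = res x ^+ n.
Proof.
move=> hx; case: (S) => H R; elim: n => [|n IH]; first by rewrite !expr0 (res1 R).
by rewrite !exprS (resM R) ?IH //; apply: OX.
Qed.

Lemma res_uv (K : fieldType) (G : zmodType) (le : rel G) (v : K -> option G) (k : fieldType) (res : K -> k)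
  (S : setting le v res) x : in_O le v x -> (res x != 0 <-> uv v x).
Proof.
move=> hx; case: (S) => H R; split.
  by move=> nz; apply: (O_notm hx) => /(resm R hx) e; rewrite e eqxx in nz.
by move=> u; apply/eqP => /(resm R hx); apply: uv_notm.
Qed.

Lemma mM (K : fieldType) (G : zmodType) (le : rel G) (v : K -> option G) (k : fieldType) (res : K -> k)
  (S : setting le v res) x y : in_O le v x -> in_m le v y -> in_m le v (x * y).
Proof.
move=> hx hy; case: (S) => H R; have hy' := mO hy.
apply/(resm R (OM H hx hy')); rewrite (resM R) //.
by move/(resm R hy'): hy => ->; rewrite mulr0.
Qed.

Lemma mD (K : fieldType) (G : zmodType) (le : rel G) (v : K -> option G) (k : fieldType) (res : K -> k)
  (S : setting le v res) x y : in_m le v x -> in_m le v y -> in_m le v (x + y).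
Proof.
move=> hx hy; case: (S) => H R; have hx' := mO hx; have hy' := mO hy.
apply/(resm R (OD H hx' hy')); rewrite (resD R) //.
by move/(resm R hy'): hy => ->; move/(resm R hx'): hx => ->; rewrite addr0.
Qed.

Lemma m1 (K : fieldType) (G : zmodType) (le : rel G) (v : K -> option G) (k : fieldType) (res : K -> k)
  (S : setting le v res) : ~ in_m le v 1.
Proof. by case: S => H R; apply: uv_notm; exact: (v1 H). Qed.

Lemma Xm (K : fieldType) (G : zmodType) (le : rel G) (v : K -> option G) (k : fieldType) (res : K -> k)
  (S : setting le v res) y n : (0 < n)%N -> in_m le v (y ^+ n) -> in_m le v y.
Proof.
move=> n0 hm; case: (S) => H R.
have hO : in_O le v y.
  have [//|/negP hy] := boolP (vle le (Some 0) (v y)); move: (notO H hy) => hi; exfalso.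
  have : in_m le v (y ^+ n * y^-1 ^+ n).
    apply: (mM S); [exact: (mO hm)|]; rewrite -(prednK n0) exprSr; apply: (mM S); [exact: (OX H _ (mO hi))|exact: hi].
  have y0 : y != 0 by apply/eqP => y0; apply: hy; rewrite y0; exact: (O0 H).
  by rewrite -exprMn mulfV // expr1n => /(m1 S).
apply/(resm R hO); move/(resm R (OX H n hO)): hm.
by rewrite (resX S) // => /eqP; rewrite expf_eq0 => /andP [_ /eqP].
Qed.

Lemma XO (K : fieldType) (G : zmodType) (le : rel G) (v : K -> option G) (k : fieldType) (res : K -> k)
  (S : setting le v res) y n : (0 < n)%N -> in_O le v (y ^+ n) -> in_O le v y.
Proof.
move=> n0 hO; case: (S) => H R.
have [//|/negP hy] := boolP (vle le (Some 0) (v y)); move: (notO H hy) => hi; exfalso.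
have : in_m le v (y ^+ n * y^-1 ^+ n).
  apply: (mM S); [exact: hO|]; rewrite -(prednK n0) exprSr; apply: (mM S); [exact: (OX H _ (mO hi))|exact: hi].
have y0 : y != 0 by apply/eqP => y0; apply: hy; rewrite y0; exact: (O0 H).
by rewrite -exprMn mulfV // expr1n => /(m1 S).
Qed.

Lemma root_div (K : fieldType) (G : zmodType) (le : rel G) (v : K -> option G)
  (H : is_valuation le v)
  (Hd : forall (g : G) (n : nat), (0 < n)%N -> exists h : G, h *+ n = g)
  a n : a != 0 -> (0 < n)%N -> exists c, c != 0 /\ uv v (c ^+ n / a).
Proof.
move=> a0 n0; case: (vSome H a0) => g eg; case: (Hd g n n0) => h eh.
case: (vS H h) => c ec; have c0 : c != 0.
  by apply/eqP => c0; move: ec; rewrite c0 (proj2 (v0 H 0) erefl).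
exists c; split => //; rewrite /uv (vM H) (vX H n ec) (vV H eg) /= eh.
by rewrite subrr.
Qed.

Lemma cmp_lt (K : fieldType) (G : zmodType) (le : rel G) (v : K -> option G)
  (H : is_valuation le v) X q : q != 0 -> in_m le v (X / q) -> ~~ vle le (v X) (v q).
Proof.
move=> q0; case: (vSome H q0) => g eg; rewrite eg.
have [->|X0] := eqVneq X 0; first by rewrite (proj2 (v0 H 0) erefl).
case: (vSome H X0) => x ex; rewrite ex /=.
rewrite /in_m /vlt (vM H) ex (vV H eg) /= => /andP [h1 h2]; apply/negP => h3.
have := og_addr (oag_of H) (- g) h3; rewrite subrr => h4.
by move: h2; rewrite (og_anti (oag_of H) h1 h4) eqxx.
Qed.

Lemma cmp_m (K : fieldType) (G : zmodType) (le : rel G) (v : K -> option G)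
  (H : is_valuation le v) a b : vle le (v a) (v b) -> in_m le v a -> in_m le v b.
Proof.
rewrite /in_m /vlt; case: (v b) => [g|] //=; case: (v a) => [x|] //= h /andP [h1 h2].
apply/andP; split; first exact: (og_trans (oag_of H) h1 h).
apply/eqP => -[] g0; move: h2; rewrite -g0 in h.
by rewrite (og_anti (oag_of H) h1 h) eqxx.
Qed.

Lemma cmp2 (K : fieldType) (G : zmodType) (le : rel G) (v : K -> option G)
  (H : is_valuation le v) a b : a != 0 -> b != 0 -> in_O le v (a / b) \/ in_O le v (b / a).
Proof.
move=> a0 b0; have [//|/negP hy] := boolP (vle le (Some 0) (v (a / b))); first by left.
by right; move: (notO H hy); rewrite invf_div => /mO.
Qed.

Lemma O_divu (K : fieldType) (G : zmodType) (le : rel G) (v : K -> option G)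
  (H : is_valuation le v) a u : in_O le v a -> uv v u -> in_O le v (a / u).
Proof. by move=> ha hu; apply: (OM H) ha (uvO H (uvV H hu)). Qed.

Lemma res_divu (K : fieldType) (G : zmodType) (le : rel G) (v : K -> option G) (k : fieldType) (res : K -> k)
  (S : setting le v res) a u : in_O le v a -> uv v u -> res (a / u) = res a / res u.
Proof.
move=> ha hu; case: (S) => H R.
have hu' := uvO H hu; have nu : res u != 0 by apply/(res_uv S hu').
have := resM R (O_divu H ha hu) hu'; rewrite divfK ?(uv_neq0 H hu) // => ->.
by rewrite mulfK.
Qed.

Lemma nontriv_pi (K : fieldType) (G : zmodType) (le : rel G) (v : K -> option G)
  (H : is_valuation le v) : (exists x : K, x != 0 /\ v x <> Some 0) ->
  exists pi, pi != 0 /\ in_m le v pi.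
Proof.
case=> x [x0 vx]; have [hx|/negP hx] := boolP (vle le (Some 0) (v x)).
  by exists x; split => //; rewrite /in_m /vlt hx /= eq_sym; apply/eqP.
by exists x^-1; split; [rewrite invr_eq0 | exact: notO].
Qed.

Lemma res_sum (K : fieldType) (G : zmodType) (le : rel G) (v : K -> option G) (k : fieldType) (res : K -> k)
  (S : setting le v res) (I : Type) (r : seq I) (P : pred I) (F : I -> K) :
  (forall i, P i -> in_O le v (F i)) ->
  in_O le v (\sum_(i <- r | P i) F i) /\ res (\sum_(i <- r | P i) F i) = \sum_(i <- r | P i) res (F i).
Proof.
move=> hF; case: (S) => H R; elim: r => [|i r [IH1 IH2]].
  by rewrite !big_nil (res0 S); split => //; exact: (O0 H).
rewrite !big_cons; case: ifP => // Pi; split; first by apply: (OD H) => //; apply: hF.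
by rewrite (resD R) ?IH2 //; apply: hF.
Qed.

Lemma size_map_le (aR rR : nzSemiRingType) (f : aR -> rR) (p : {poly aR}) :
  (size (map_poly f p) <= size p)%N.
Proof. by rewrite /map_poly size_poly. Qed.

Lemma horner_O (K : fieldType) (G : zmodType) (le : rel G) (v : K -> option G) (k : fieldType) (res : K -> k)
  (S : setting le v res) (p : {poly K}) y :
  (forall i, in_O le v p`_i) -> in_O le v y ->
  in_O le v p.[y] /\ res p.[y] = (map_poly res p).[res y].
Proof.
move=> hp hy; case: (S) => H R.
have hF : forall i : 'I_(size p), true -> in_O le v (p`_i * y ^+ i).
  by move=> i _; apply: (OM H) => //; apply: (OX H).
case: (res_sum S (index_enum 'I_(size p)) hF) => h1 h2.
rewrite horner_coef; split => //; rewrite h2 (horner_coef_wide _ (size_map_le _ _)).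
apply: eq_bigr => i _; rewrite (resM R) ?(resX S) ?coef_map_id0 ?(res0 S) //.
exact: (OX H).
Qed.

Lemma horner2_O (K : fieldType) (G : zmodType) (le : rel G) (v : K -> option G) (k : fieldType) (res : K -> k)
  (S : setting le v res) (f : {poly {poly K}}) y z :
  (forall i j, in_O le v (f`_i)`_j) -> in_O le v y -> in_O le v z ->
  in_O le v (map_poly (fun p : {poly K} => p.[y]) f).[z] /\
  res (map_poly (fun p : {poly K} => p.[y]) f).[z] =
  (map_poly (fun p : {poly k} => p.[res y]) (map_poly (map_poly res) f)).[res z].
Proof.
move=> hf hy hz.
have hc : forall i, in_O le v (map_poly (fun p : {poly K} => p.[y]) f)`_i.
  by move=> i; rewrite coef_map_id0 ?horner0 //; case: (horner_O S (hf i) hy).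
case: (horner_O S hc hz) => h1 h2; split => //; rewrite h2; congr (_.[_]).
apply/polyP => i; rewrite !coef_map_id0 ?horner0 ?map_poly0 ?(res0 S) //.
by case: (horner_O S (hf i) hy).
Qed.

Definition Phi (K : pzRingType) (n : nat) (p : nat -> K) (a b : K) : K :=
  a ^+ n - \sum_(i < n) p i * a ^+ i * b ^+ (n - i).

Lemma Phi_hom (K : comPzRingType) n (p : nat -> K) l a b :
  Phi n p (l * a) (l * b) = l ^+ n * Phi n p a b.
Proof.
rewrite /Phi mulrBr exprMn; congr (_ - _); rewrite mulr_sumr; apply: eq_bigr => i _.
have e : l ^+ n = l ^+ i * l ^+ (n - i) by rewrite -exprD subnKC // ltnW.
by rewrite e !exprMn [RHS](AC (2*3) (3*(1*4)*(2*5))).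
Qed.

Lemma Phi_a0 (K : pzRingType) n (p : nat -> K) a : (0 < n)%N -> Phi n p a 0 = a ^+ n.
Proof.
move=> n0; rewrite /Phi big1 ?subr0 // => i _.
by rewrite expr0n subn_eq0 leqNgt ltn_ord /= mulr0.
Qed.

Lemma Phi_00 (K : pzRingType) n (p : nat -> K) : (0 < n)%N -> Phi n p 0 0 = 0.
Proof. by move=> n0; rewrite Phi_a0 // expr0n; case: n n0. Qed.

Lemma O_sum (K : fieldType) (G : zmodType) (le : rel G) (v : K -> option G)
  (H : is_valuation le v) (I : Type) (r : seq I) (P : pred I) (F : I -> K) :
  (forall i, P i -> in_O le v (F i)) -> in_O le v (\sum_(i <- r | P i) F i).
Proof.
move=> hF; elim: r => [|i r IH]; first by rewrite big_nil; exact: (O0 H).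
by rewrite big_cons; case: ifP => // Pi; apply: (OD H) => //; apply: hF.
Qed.

Lemma Phi_O (K : fieldType) (G : zmodType) (le : rel G) (v : K -> option G)
  (H : is_valuation le v) n p a b : (forall i, in_O le v (p i)) ->
  in_O le v a -> in_O le v b -> in_O le v (Phi n p a b).
Proof.
move=> hp ha hb; apply: (OB H); first exact: (OX H).
by apply: (O_sum H) => i _; apply: (OM H); [apply: (OM H); [apply: hp | exact: (OX H)] | exact: (OX H)].
Qed.

Definition noroot (k : fieldType) n (P : nat -> k) :=
  forall x : k, x ^+ n != \sum_(i < n) P i * x ^+ i.

Lemma Phi_uv (K : fieldType) (G : zmodType) (le : rel G) (v : K -> option G) (k : fieldType) (res : K -> k)
  (S : setting le v res) n p (P : nat -> k) a b : (0 < n)%N ->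
  (forall i, in_O le v (p i)) -> (forall i, res (p i) = P i) -> noroot n P ->
  in_O le v a -> in_O le v b -> uv v a \/ uv v b -> uv v (Phi n p a b).
Proof.
move=> n0 hp hP hn ha hb hab; case: (S) => H R.
apply/(res_uv S (Phi_O H n hp ha hb)).
have hF : forall i : 'I_n, true -> in_O le v (p i * a ^+ i * b ^+ (n - i)).
  by move=> i _; apply: (OM H); [apply: (OM H); [apply: hp | exact: (OX H)] | exact: (OX H)].
rewrite /Phi (resB S (OX H n ha) (O_sum H _ hF)).
case: (res_sum S (index_enum 'I_n) hF) => _ ->.
have eT : forall i : 'I_n, res (p i * a ^+ i * b ^+ (n - i)) = P i * res a ^+ i * res b ^+ (n - i).
  move=> i; rewrite (resM R); last exact: (OX H); last by apply: (OM H); [apply: hp | exact: (OX H)].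
  by rewrite (resM R) ?hP ?(resX S) //; exact: (OX H).
under eq_bigr => i _ do rewrite eT.
rewrite (resX S) //.
have [b0|b0] := eqVneq (res b) 0.
  have a0 : res a != 0.
    case: hab => h; first by apply/(res_uv S ha).
    by move/(res_uv S hb): h; rewrite b0 eqxx.
  rewrite big1 ?subr0 ?expf_neq0 // => i _.
  by rewrite b0 expr0n subn_eq0 leqNgt ltn_ord /= mulr0.
set t := res a / res b.
have -> : res a = t * res b by rewrite /t divfK.
rewrite exprMn.
under eq_bigr => i _ do rewrite exprMn -!mulrA -exprD subnKC ?(ltnW (ltn_ord i)) // mulrA.
rewrite -mulr_suml -mulrBl mulf_neq0 ?expf_neq0 //.
by rewrite subr_eq0; apply: hn.
Qed.

Fixpoint Psi (K : pzRingType) (n : nat) (p : nat -> K) (s : seq K) : K :=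
  match s with
  | [::] => 0
  | a :: l => Phi n p (a ^+ (n ^ size l)) (Psi n p l)
  end.

Lemma Psi_hom (K : comPzRingType) n (p : nat -> K) l s :
  Psi n p (map (fun e => l * e) s) = l ^+ (n ^ size s) * Psi n p s.
Proof.
elim: s => [|a s IH] /=; first by rewrite mulr0.
by rewrite IH size_map exprMn Phi_hom -exprM expnSr.
Qed.

Lemma Psi_O (K : fieldType) (G : zmodType) (le : rel G) (v : K -> option G)
  (H : is_valuation le v) n p s : (forall i, in_O le v (p i)) ->
  (forall e, e \in s -> in_O le v e) -> in_O le v (Psi n p s).
Proof.
move=> hp; elim: s => [|a s IH] hs /=; first exact: (O0 H).
apply: (Phi_O H) => //; first by apply: (OX H); apply: hs; rewrite inE eqxx.
by apply: IH => e he; apply: hs; rewrite inE he orbT.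
Qed.

Lemma Psi_uv (K : fieldType) (G : zmodType) (le : rel G) (v : K -> option G) (k : fieldType) (res : K -> k)
  (S : setting le v res) n p (P : nat -> k) s : (0 < n)%N ->
  (forall i, in_O le v (p i)) -> (forall i, res (p i) = P i) -> noroot n P ->
  (forall e, e \in s -> in_O le v e) -> (exists2 e, e \in s & uv v e) -> uv v (Psi n p s).
Proof.
move=> n0 hp hP hn; case: (S) => H R.
elim: s => [|a s IH] hs [e]; first by rewrite in_nil.
have hs' : forall e, e \in s -> in_O le v e by move=> e' he; apply: hs; rewrite inE he orbT.
have ha : in_O le v a by apply: hs; rewrite inE eqxx.
rewrite inE => /orP [/eqP ->|es] he /=.
  apply: (Phi_uv S n0 hp hP hn (OX H _ ha) (Psi_O H n hp hs')).
  by left; apply: (uvX H).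
apply: (Phi_uv S n0 hp hP hn (OX H _ ha) (Psi_O H n hp hs')).
by right; apply: IH => //; exists e.
Qed.

Lemma Psi_nseq0 (K : pzRingType) n (p : nat -> K) r : (0 < n)%N -> Psi n p (nseq r 0) = 0.
Proof.
move=> n0; elim: r => [|r IH] //=; rewrite IH expr0n.
by rewrite expn_eq0 (negbTE (lt0n_neq0 n0)) /= Phi_00.
Qed.

Lemma Psi_x0 (K : pzRingType) n (p : nat -> K) r x : (0 < n)%N ->
  Psi n p (x :: nseq r 0) = x ^+ (n ^ r.+1).
Proof. by move=> n0 /=; rewrite Psi_nseq0 // Phi_a0 // size_nseq -exprM expnSr. Qed.

Lemma minel (K : fieldType) (G : zmodType) (le : rel G) (v : K -> option G)
  (H : is_valuation le v) (s : seq K) : (exists2 e, e \in s & e != 0) ->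
  exists l, [/\ l \in s, l != 0 & forall e, e \in s -> in_O le v (e / l)].
Proof.
elim: s => [|a s IH] [e]; first by rewrite in_nil.
have [hz|hz] := boolP (has (fun e => e != 0) s).
  case/hasP: hz => e' he' ne'; case: IH; first by exists e'.
  move=> l [ls l0 hl] _ _.
  have [a0|a0] := eqVneq a 0.
    exists l; split => //; first by rewrite inE ls orbT.
    by move=> x; rewrite inE => /orP [/eqP ->|/hl //]; rewrite a0 mul0r; exact: (O0 H).
  case: (cmp2 H a0 l0) => h.
    exists l; split => //; first by rewrite inE ls orbT.
    by move=> x; rewrite inE => /orP [/eqP ->|/hl //].
  exists a; split => //; first by rewrite inE eqxx.
  move=> x; rewrite inE => /orP [/eqP ->|/hl hx]; first by rewrite divff //; exact: (O1 H).
  have -> : x / a = x / l * (l / a) by rewrite mulrA divfK.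
  by apply: (OM H) hx h.
move=> es e0; have sz : forall x, x \in s -> x = 0.
  by move=> x xs; apply/eqP; apply: contraNT hz => nx; apply/hasP; exists x.
have a0 : a != 0.
  by move: es; rewrite inE => /orP [/eqP <- //|/sz e00]; rewrite e00 eqxx in e0.
exists a; split => //; first by rewrite inE eqxx.
move=> x; rewrite inE => /orP [/eqP ->|/sz ->]; first by rewrite divff //; exact: (O1 H).
by rewrite mul0r; exact: (O0 H).
Qed.

Lemma Psi_bound (K : fieldType) (G : zmodType) (le : rel G) (v : K -> option G) (k : fieldType) (res : K -> k)
  (S : setting le v res) n p (P : nat -> k) x s : (0 < n)%N ->
  (forall i, in_O le v (p i)) -> (forall i, res (p i) = P i) -> noroot n P ->
  (forall e, e \in x :: s -> in_O le v e) -> x != 0 ->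
  Psi n p (x :: s) != 0 /\ in_O le v (x ^+ (n ^ size (x :: s)) / Psi n p (x :: s)).
Proof.
move=> n0 hp hP hn hs x0; case: (S) => H R.
case: (minel H (s := x :: s)); first by exists x => //; rewrite inE eqxx.
move=> l [ls l0 hl].
set s' := map (fun e => e / l) (x :: s).
have es : x :: s = map (fun e => l * e) s'.
  by rewrite /s' -map_comp -[LHS]map_id; apply: eq_map => e /=; rewrite mulrC divfK.
have hs' : forall e, e \in s' -> in_O le v e.
  by move=> e /mapP [e' he' ->]; apply: hl.
have u' : uv v (Psi n p s').
  apply: (Psi_uv S n0 hp hP hn hs'); exists 1.
    by apply/mapP; exists l => //; rewrite divff.
  exact: (v1 H).
have ePsi : Psi n p (x :: s) = l ^+ (n ^ size (x :: s)) * Psi n p s'.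
  by rewrite {1}es Psi_hom /s' size_map.
rewrite ePsi; split; first by rewrite mulf_neq0 ?expf_neq0 ?(uv_neq0 H u').
rewrite invfM mulrA -expr_div_n; apply: (O_divu H) => //.
by apply: (OX H); apply: hl; rewrite inE eqxx.
Qed.

Definition tsum (K : pzRingType) (n : nat) (T : nat -> GRing.term K) : GRing.term K :=
  \big[GRing.Add/GRing.Const 0]_(i < n) T i.

Lemma eval_tsum (K : unitRingType) e n (T : nat -> GRing.term K) :
  GRing.eval e (tsum n T) = \sum_(i < n) GRing.eval e (T i).
Proof. by rewrite /tsum (big_morph (GRing.eval e) (id1 := 0) (op1 := +%R)). Qed.

Lemma inv_free_tsum (K : pzRingType) n (T : nat -> GRing.term K) :
  (forall i, inv_free (T i)) -> inv_free (tsum n T).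
Proof. by move=> hT; rewrite /tsum; apply: (big_rec (fun t => inv_free t)) => //= i y _ ->; rewrite hT. Qed.

Definition PhiT (K : pzRingType) n (p : nat -> K) (A B : GRing.term K) : GRing.term K :=
  GRing.Add (GRing.Exp A n) (GRing.Opp (tsum n (fun i =>
    GRing.Mul (GRing.Mul (GRing.Const (p i)) (GRing.Exp A i)) (GRing.Exp B (n - i))))).

Lemma eval_PhiT (K : unitRingType) (e : seq K) n (p : nat -> K) (A B : GRing.term K) :
  GRing.eval e (PhiT n p A B) = Phi n p (GRing.eval e A) (GRing.eval e B).
Proof. by rewrite /PhiT /= eval_tsum. Qed.

Lemma inv_free_PhiT (K : pzRingType) n p (A B : GRing.term K) :
  inv_free A -> inv_free B -> inv_free (PhiT n p A B).
Proof. by move=> hA hB /=; rewrite hA /=; apply: inv_free_tsum => i /=; rewrite hA hB. Qed.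

Fixpoint PsiT (K : pzRingType) n (p : nat -> K) (s : seq (GRing.term K)) : GRing.term K :=
  match s with
  | [::] => GRing.Const 0
  | a :: l => PhiT n p (GRing.Exp a (n ^ size l)) (PsiT n p l)
  end.

Lemma eval_PsiT (K : unitRingType) (e : seq K) n (p : nat -> K) (s : seq (GRing.term K)) :
  GRing.eval e (PsiT n p s) = Psi n p (map (GRing.eval e) s).
Proof.
elim: s => [|a s IH] //.
change (GRing.eval e (PhiT n p (GRing.Exp a (n ^ size s)) (PsiT n p s)) = Psi n p (map (GRing.eval e) (a :: s))).
by rewrite eval_PhiT IH /= size_map.
Qed.

Lemma inv_free_PsiT (K : pzRingType) n p (s : seq (GRing.term K)) :
  all (@inv_free K) s -> inv_free (PsiT n p s).
Proof.
elim: s => [|a s IH] //= /andP [ha hs].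
by apply: inv_free_PhiT => //=; apply: IH.
Qed.

(* F_c(x, z) = Phi(x,pi)^N * g(c pi^n / Phi(x,pi), z), as a polynomial *)
Definition Fk (K : fieldType) n (p : nat -> K) (pi : K) (g : {poly {poly K}}) (N : nat)
  (c x z : K) : K :=
  \sum_(i < size g) \sum_(j < N)
     (g`_i)`_j * (c * pi ^+ n) ^+ j * Phi n p x pi ^+ (N - j) * z ^+ i.

Definition FT (K : fieldType) n (p : nat -> K) (pi : K) (g : {poly {poly K}}) (N : nat)
  (c : K) (X Z : GRing.term K) : GRing.term K :=
  tsum (size g) (fun i => tsum N (fun j =>
    GRing.Mul (GRing.Mul (GRing.Mul (GRing.Const ((g`_i)`_j)) (GRing.Const ((c * pi ^+ n) ^+ j)))
      (GRing.Exp (PhiT n p X (GRing.Const pi)) (N - j))) (GRing.Exp Z i))).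

Lemma eval_FT (K : fieldType) (e : seq K) n (p : nat -> K) pi g N c (X Z : GRing.term K) :
  GRing.eval e (@FT K n p pi g N c X Z) = Fk n p pi g N c (GRing.eval e X) (GRing.eval e Z).
Proof.
rewrite /FT /Fk eval_tsum; apply: eq_bigr => i _; rewrite eval_tsum.
apply: eq_bigr => j _.
change (GRing.eval e (GRing.Const ((g`_i)`_j)) * GRing.eval e (GRing.Const ((c * pi ^+ n) ^+ j)) *
   GRing.eval e (PhiT n p X (GRing.Const pi)) ^+ (N - j) * GRing.eval e Z ^+ i =
   (g`_i)`_j * (c * pi ^+ n) ^+ j * Phi n p (GRing.eval e X) pi ^+ (N - j) * GRing.eval e Z ^+ i).
by rewrite eval_PhiT.
Qed.

Lemma inv_free_FT (K : fieldType) n p pi g N c (X Z : GRing.term K) :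
  inv_free X -> inv_free Z -> inv_free (@FT K n p pi g N c X Z).
Proof.
move=> hX hZ; apply: inv_free_tsum => i; apply: inv_free_tsum => j.
have hP := inv_free_PhiT n p hX (isT : inv_free (GRing.Const pi)).
by move: hP; rewrite /= => ->; rewrite hZ.
Qed.

Lemma Fk_eq (K : fieldType) n (p : nat -> K) (pi : K) (g : {poly {poly K}}) N (c x z : K) :
  (forall i, (size (g`_i)%R <= N)%N) -> Phi n p x pi != 0 ->
  Fk n p pi g N c x z =
  Phi n p x pi ^+ N * (map_poly (fun q : {poly K} => q.[c * pi ^+ n / Phi n p x pi]) g).[z].
Proof.
move=> hN F0; set y := c * pi ^+ n / Phi n p x pi; set F := Phi n p x pi.
rewrite (horner_coef_wide _ (size_map_le _ _)) mulr_sumr /Fk; apply: eq_bigr => i _.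
rewrite coef_map_id0 ?horner0 // (horner_coef_wide _ (hN i)) mulr_suml mulr_sumr.
apply: eq_bigr => j _.
have ej : F ^+ N * y ^+ j = (c * pi ^+ n) ^+ j * F ^+ (N - j).
  rewrite /y expr_div_n mulrCA; congr (_ * _).
  by rewrite -{1}(subnK (ltnW (ltn_ord j))) exprD mulfK // expf_neq0.
by rewrite -/F -[_ * _ * F ^+ _]mulrA -ej [LHS](AC ((1*2)*1) (2*(1*3*4))).
Qed.

Lemma cancel_l (K : fieldType) (a b c : K) : a != 0 -> a * b / (a * c) = b / c.
Proof. by move=> a0; rewrite invfM mulrACA mulfV // mul1r. Qed.

Definition gev (K : fieldType) (g : {poly {poly K}}) (y z : K) :=
  (map_poly (fun q : {poly K} => q.[y]) g).[z].

Lemma nth_O (K : fieldType) (G : zmodType) (le : rel G) (v : K -> option G)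
  (H : is_valuation le v) (zs : seq K) :
  (forall z, z \in zs -> in_O le v z) -> forall j, in_O le v (nth 0 zs j).
Proof.
move=> h j; case: (ltnP j (size zs)) => hj; first by apply: h; exact: mem_nth.
by rewrite nth_default //; exact: (O0 H).
Qed.

Lemma mX (K : fieldType) (G : zmodType) (le : rel G) (v : K -> option G) (k : fieldType) (res : K -> k)
  (S : setting le v res) x m : (0 < m)%N -> in_m le v x -> in_m le v (x ^+ m).
Proof.
case: m => [//|m] _ hx; case: (S) => H R; rewrite exprSr.
exact: (mM S (OX H _ (mO hx)) hx).
Qed.

Lemma regionA (K : fieldType) (G : zmodType) (le : rel G) (v : K -> option G) (k : fieldType) (res : K -> k)
  (S : setting le v res) n p (P : nat -> k) pi (g : {poly {poly K}}) N (C : seq K) x zs :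
  (0 < n)%N -> (forall i, in_O le v (p i)) -> (forall i, res (p i) = P i) -> noroot n P ->
  pi != 0 -> in_m le v pi -> (forall i j, in_O le v ((g`_i)`_j)) ->
  (forall i, (size (g`_i)%R <= N)%N) ->
  (forall c, c \in C -> in_O le v c) ->
  (forall u, uv v u -> exists2 c, c \in C & forall z, in_O le v z -> uv v (gev g (c / u) z)) ->
  in_O le v x -> (forall j, in_O le v (nth 0 zs j)) ->
  let L := x ^+ (n * N + 1) :: [seq Fk n p pi g N (C`_j) x (nth 0 zs j) | j <- iota 0 (size C)] in
  [/\ Psi n p L != 0, in_O le v (Psi n p L) &
      in_m le v (pi ^+ ((n * N + 1) * n ^ (size C).+1) / Psi n p L)].
Proof.
move=> n0 hp hP hn pi0 hpi hg hN hC hgood hx hz L; case: (S) => H R.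
set r := size C; set D := (n ^ r.+1)%N.
have D0 : (0 < D)%N by rewrite expn_gt0 n0.
have hCj : forall j, in_O le v (C`_j) by exact: (nth_O H hC).
have hpiO := mO hpi.
have [hw|/negP hw] := boolP (vle le (Some 0) (v (x / pi))).
-
  set w := x / pi; have ex : x = pi * w by rewrite /w mulrC divfK.
  set u := Phi n p w 1.
  have hu : uv v u := Phi_uv S n0 hp hP hn hw (O1 H) (or_intror (v1 H)).
  have eF : Phi n p x pi = pi ^+ n * u by rewrite /u -Phi_hom mulr1 -ex.
  have F0 : Phi n p x pi != 0 by rewrite eF mulf_neq0 ?expf_neq0 ?(uv_neq0 H hu).
  set es := [seq u ^+ N * gev g (C`_j / u) (nth 0 zs j) | j <- iota 0 r].
  have eL : L = map (fun e => pi ^+ (n * N) * e) (pi * w ^+ (n * N + 1) :: es).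
    rewrite /L /=; congr (_ :: _); first by rewrite ex exprMn addn1 exprSr -mulrA.
    rewrite /es -map_comp; apply: eq_map => j /=.
    rewrite Fk_eq // eF exprMn -exprM mulrA; congr (_ * gev _ _ _).
    by rewrite [C`_j * _]mulrC cancel_l ?expf_neq0.
  have hes : forall e, e \in pi * w ^+ (n * N + 1) :: es -> in_O le v e.
    move=> e; rewrite inE => /orP [/eqP ->|/mapP [j _ ->]].
      by apply: (OM H) hpiO (OX H _ hw).
    apply: (OM H); first exact: (OX H _ (uvO H hu)).
    by case: (horner2_O S (hg) (O_divu H (hCj j) hu) (hz j)).
  have hU : uv v (Psi n p (pi * w ^+ (n * N + 1) :: es)).
    apply: (Psi_uv S n0 hp hP hn hes).
    case: (hgood u hu) => c cC hc; exists (u ^+ N * gev g (C`_(index c C) / u) (nth 0 zs (index c C))).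
      rewrite inE; apply/orP; right; apply/mapP; exists (index c C) => //.
      by rewrite mem_iota add0n index_mem cC.
    by apply: (uvM H); [apply: (uvX H) | rewrite nth_index //; apply: hc].
  have ePsi : Psi n p L = pi ^+ (n * N * D) * Psi n p (pi * w ^+ (n * N + 1) :: es).
    by rewrite eL Psi_hom -exprM /= /es size_map size_iota.
  rewrite ePsi; split.
  + by rewrite mulf_neq0 ?expf_neq0 ?(uv_neq0 H hU).
  + by apply: (OM H); [exact: (OX H _ hpiO) | exact: (uvO H hU)].
  + rewrite -/D mulnDl mul1n exprD cancel_l ?expf_neq0 // mulrC.
    by apply: (mM S); [exact: (uvO H (uvV H hU)) | exact: (mX S D0 hpi)].
-
  have x0 : x != 0 by apply/eqP => x0; apply: hw; rewrite x0 mul0r; exact: (O0 H).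
  set t := pi / x; have ht : in_m le v t by rewrite /t -invf_div; exact: (notO H hw).
  have ept : pi = x * t by rewrite /t mulrC divfK.
  set u := Phi n p 1 t.
  have hu : uv v u := Phi_uv S n0 hp hP hn (O1 H) (mO ht) (or_introl (v1 H)).
  have eF : Phi n p x pi = x ^+ n * u by rewrite /u -Phi_hom mulr1 -ept.
  have F0 : Phi n p x pi != 0 by rewrite eF mulf_neq0 ?expf_neq0 ?(uv_neq0 H hu).
  set es := [seq u ^+ N * gev g (C`_j * t ^+ n / u) (nth 0 zs j) | j <- iota 0 r].
  have eL : L = map (fun e => x ^+ (n * N) * e) (x :: es).
    rewrite /L /=; congr (_ :: _); first by rewrite addn1 exprSr.
    rewrite /es -map_comp; apply: eq_map => j /=.
    rewrite Fk_eq // eF exprMn -exprM mulrA; congr (_ * gev _ _ _).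
    by rewrite ept exprMn mulrCA cancel_l ?expf_neq0.
  have hes : forall e, e \in x :: es -> in_O le v e.
    move=> e; rewrite inE => /orP [/eqP -> //|/mapP [j _ ->]].
    apply: (OM H); first exact: (OX H _ (uvO H hu)).
    have hy : in_O le v (C`_j * t ^+ n / u).
      by apply: (O_divu H) hu; apply: (OM H) (hCj j) (OX H _ (mO ht)).
    by case: (horner2_O S (hg) hy (hz j)).
  have ePsi : Psi n p L = x ^+ (n * N * D) * Psi n p (x :: es).
    by rewrite eL Psi_hom -exprM /= /es size_map size_iota.
  case: (Psi_bound S n0 hp hP hn hes x0) => hP0 hPb.
  rewrite ePsi; split.
  + by rewrite mulf_neq0 ?expf_neq0.
  + by apply: (OM H); [exact: (OX H _ hx) | exact: (Psi_O H n hp hes)].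
  + rewrite -/D ept mulnDl mul1n exprMn exprD -mulrA cancel_l ?expf_neq0 // mulrAC.
    apply: (mM S); last by apply: (mX S _ ht); rewrite addn_gt0 D0 orbT.
    by move: hPb; rewrite /= /es size_map size_iota.
Qed.

Lemma list_choice (K : pzRingType) (Pr : nat -> K -> Prop) r :
  (forall j, (j < r)%N -> exists z, Pr j z) ->
  exists zs : seq K, size zs = r /\ forall j, (j < r)%N -> Pr j (nth 0 zs j).
Proof.
elim: r => [|r IH] h; first by exists [::].
case: IH => [j hj|zs [sz hzs]]; first by apply: h; rewrite ltnS ltnW.
case: (h r (ltnSn r)) => z hz; exists (rcons zs z); split; first by rewrite size_rcons sz.
move=> j; rewrite ltnS leq_eqVlt => /orP [/eqP ->|hj].
  by rewrite nth_rcons sz ltnn eqxx.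
by rewrite nth_rcons sz hj; apply: hzs.
Qed.

Lemma map_zero (K : pzRingType) (s : seq nat) (f : nat -> K) :
  (forall j, j \in s -> f j = 0) -> map f s = nseq (size s) 0.
Proof.
elim: s => [|a s IH] //= h; rewrite h ?inE ?eqxx // IH // => j hj.
by apply: h; rewrite inE hj orbT.
Qed.

Lemma alg1 (K : fieldType) (a b q : K) : b != 0 -> a / (q * b) * (b / q) = a / (q ^+ 2).
Proof. by move=> b0; rewrite invfM mulrA mulrA (mulfVK b0) -mulrA -invfM expr2. Qed.

Lemma alg2 (K : fieldType) (b q X : K) : q != 0 -> b / q * (q * b / X) = b * b / X.
Proof. by move=> q0; rewrite mulrA [b / q * _]mulrA (mulfVK q0). Qed.

Lemma main_lemma (K : fieldType) (G : zmodType) (le : rel G) (v : K -> option G) (k : fieldType) (res : K -> k)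
  (S : setting le v res) (Hext : extremal le v)
  (Hd : forall (g : G) (n : nat), (0 < n)%N -> exists h : G, h *+ n = g)
  n p (P : nat -> k) pi (g : {poly {poly K}}) (C : seq K) :
  (0 < n)%N -> (forall i, in_O le v (p i)) -> (forall i, res (p i) = P i) -> noroot n P ->
  pi != 0 -> in_m le v pi -> (forall i j, in_O le v ((g`_i)`_j)) ->
  (forall eps, in_m le v eps -> exists2 z, in_O le v z & gev g eps z = 0) ->
  (forall c, c \in C -> in_O le v c) ->
  (forall u, uv v u -> exists2 c, c \in C & forall z, in_O le v z -> uv v (gev g (c / u) z)) ->
  False.
Proof.
move=> n0 hp hP hn pi0 hpi hg hroot hC hgood; case: (S) => H R.
set N := (\max_(i < size g) size (g`_i)%R)%N.
have hN : forall i, (size (g`_i)%R <= N)%N.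
  move=> i; case: (ltnP i (size g)) => hi.
    exact: (@leq_bigmax _ (fun i : 'I_(size g) => size (g`_i)%R) (Ordinal hi)).
  by rewrite nth_default // size_poly0.
set r := size C; set M := (n * N + 1)%N; set D := (n ^ r.+1)%N; set E := (M * D)%N.
have D0 : (0 < D)%N by rewrite expn_gt0 n0.
have E0 : (0 < E)%N by rewrite /E muln_gt0 D0 /M addn1.
set QT := PsiT n p (GRing.Exp 'X_0 M ::
           [seq FT n p pi g N C`_j 'X_0 'X_(j.+1) | j <- iota 0 r]).
have eQ : forall b, GRing.eval b QT =
    Psi n p (b`_0 ^+ M :: [seq Fk n p pi g N C`_j b`_0 (nth 0 (behead b) j) | j <- iota 0 r]).
  move=> b; rewrite /QT eval_PsiT /= -map_comp; congr (Psi _ _ (_ :: _)).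
  by apply: eq_map => j /=; rewrite eval_FT /= nth_behead.
have hfree : inv_free QT.
  rewrite /QT; apply: inv_free_PsiT => /=; rewrite all_map; apply/allP => j _ /=.
  exact: inv_free_FT.
case: (Hext r.+1 QT hfree) => a [sa ha hmax].
have ha0 : in_O le v a`_0 by exact: (nth_O H ha).
have hab : forall j, in_O le v (nth 0 (behead a) j).
  by move=> j; rewrite nth_behead; exact: (nth_O H ha).
case: (regionA S n0 hp hP hn pi0 hpi hg hN hC hgood ha0 hab) => q0 qO qm.
rewrite -/r -/M -/D -/E -eQ in q0 qO qm.
set q := GRing.eval a QT in q0 qO qm.
have qp0 : q * pi ^+ E != 0 by rewrite mulf_neq0 ?expf_neq0.
have E2 : (0 < 2 * E)%N by rewrite muln_gt0 E0.
case: (root_div H Hd qp0 E2) => x [x0 hux].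
have h4 : in_m le v (x ^+ E / q).
  apply: (Xm S (isT : (0 < 2)%N)).
  have -> : (x ^+ E / q) ^+ 2 = (x ^+ (2 * E) / (q * pi ^+ E)) * (pi ^+ E / q).
    by rewrite alg1 ?expf_neq0 // expr_div_n -exprM mulnC expr2.
  by apply: (mM S) qm; apply: (uvO H).
have hxO : in_O le v x.
  apply: (XO S E0); rewrite -(divfK q0 (x ^+ E)); apply: (OM H) qO.
  exact: (mO h4).
have ht : in_m le v (pi / x).
  apply: (Xm S E2).
  have -> : (pi / x) ^+ (2 * E) = (pi ^+ E / q) * (x ^+ (2 * E) / (q * pi ^+ E))^-1.
    by rewrite invf_div alg2 // -exprD addnn -mul2n expr_div_n.
  by rewrite mulrC; apply: (mM S) qm; apply: (uvO H); apply: (uvV H).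
set t := pi / x.
have ept : pi = x * t by rewrite /t mulrC divfK.
set u := Phi n p 1 t.
have hu : uv v u := Phi_uv S n0 hp hP hn (O1 H) (mO ht) (or_introl (v1 H)).
have eF : Phi n p x pi = x ^+ n * u by rewrite /u -Phi_hom mulr1 -ept.
have F0 : Phi n p x pi != 0 by rewrite eF mulf_neq0 ?expf_neq0 ?(uv_neq0 H hu).
have hCj : forall j, in_O le v (C`_j) by exact: (nth_O H hC).
have hy : forall j, in_m le v (C`_j * pi ^+ n / Phi n p x pi).
  move=> j; have -> : C`_j * pi ^+ n / Phi n p x pi = u^-1 * (C`_j * t ^+ n).
    by rewrite eF ept exprMn mulrCA cancel_l ?expf_neq0 // mulrC.
  apply: (mM S); first exact: (uvO H (uvV H hu)).
  by apply: (mM S) (hCj j) (mX S n0 ht).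
case: (@list_choice K (fun j z => in_O le v z /\ gev g (C`_j * pi ^+ n / Phi n p x pi) z = 0) r).
  by move=> j _; case: (hroot _ (hy j)) => z hz1 hz2; exists z.
move=> zs [szs hzs].
have hb : forall y, y \in x :: zs -> in_O le v y.
  move=> y; rewrite inE => /orP [/eqP -> //|yz].
  have hi : (index y zs < r)%N by rewrite -szs index_mem.
  by case: (hzs _ hi); rewrite nth_index.
have sb : size (x :: zs) = r.+1 by rewrite /= szs.
have := hmax _ sb hb.
rewrite (eQ (x :: zs)) [nth 0 (x :: zs) 0]/= [behead _]/= (map_zero (s := iota 0 r)); last first.
  move=> j; rewrite mem_iota add0n => hj.
  by rewrite Fk_eq //; case: (hzs _ hj) => _; rewrite /gev => ->; rewrite mulr0.
rewrite size_iota Psi_x0 // -exprM -/D -/E.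
by apply/negP; apply: (cmp_lt H q0 h4).
Qed.

Lemma idt (K : comPzRingType) (z0 del eps : K) :
  (z0 + del) ^+ 2 - (z0 + del) - eps = (z0 ^+ 2 - z0 - eps) - del * (1 - (z0 + z0)) + del ^+ 2.
Proof.
rewrite sqrrD mulrBr mulr1 mulrDr opprB.
rewrite mulr2n [z0 * del]mulrC opprD !addrA.
by rewrite [LHS](ACl (1*5*7*2*3*6*4)).
Qed.

Lemma OMn (K : fieldType) (G : zmodType) (le : rel G) (v : K -> option G)
  (H : is_valuation le v) (x : K) m : in_O le v x -> in_O le v (x *+ m).
Proof.
move=> hx; elim: m => [|m IH]; first by rewrite mulr0n; exact: (O0 H).
by rewrite mulrS; apply: (OD H).
Qed.

Definition gQ (K : fieldType) : {poly {poly K}} := 'X^2 - 'X - ('X)%:P.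

Lemma gevQ (K : fieldType) (y z : K) : gev (gQ K) y z = z ^+ 2 - z - y.
Proof.
rewrite /gev /gQ.
have -> : (fun q : {poly K} => q.[y]) = horner_eval y by [].
by rewrite !rmorphB /= map_polyXn map_polyX map_polyC /= !hornerE horner_evalE hornerX.
Qed.

Lemma gQ_O (K : fieldType) (G : zmodType) (le : rel G) (v : K -> option G)
  (H : is_valuation le v) i j : in_O le v (((gQ K)`_i)`_j).
Proof.
rewrite /gQ !coefB coefXn coefX coefC !coefMn !coef1.
apply: (OB H); first apply: (OB H); try (apply: (OMn H); apply: (OMn H); exact: (O1 H)).
case: (i == 0); last by rewrite coef0; exact: (O0 H).
by rewrite coefX; apply: (OMn H); exact: (O1 H).
Qed.

Lemma newton (K : fieldType) (G : zmodType) (le : rel G) (v : K -> option G) (k : fieldType) (res : K -> k)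
  (S : setting le v res) (Hext : extremal le v) eps :
  in_m le v eps -> exists2 z, in_O le v z & z ^+ 2 - z - eps = 0.
Proof.
move=> he; case: (S) => H R.
pose T : GRing.term K := GRing.Add (GRing.Add (GRing.Exp 'X_0 2) (GRing.Opp 'X_0)) (GRing.Opp (GRing.Const eps)).
have eT : forall b, GRing.eval b T = b`_0 ^+ 2 - b`_0 - eps by [].
case: (Hext 1%N T isT) => a [sa ha hmax].
set z0 := a`_0; have hz0 : in_O le v z0 by exact: (nth_O H ha).
set e0 := z0 ^+ 2 - z0 - eps.
have hb0 : forall x, x \in [:: 0] -> in_O le v x by move=> x; rewrite inE => /eqP ->; exact: (O0 H).
have hm0 : in_m le v e0.
  have := hmax [:: 0] erefl hb0; rewrite !eT /= -/z0 -/e0 => h; apply: (cmp_m H h).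
  rewrite expr0n /= subr0 sub0r -mulN1r; apply: (mM S) he.
  by apply: (ON H); exact: (O1 H).
have [e00|e0n] := eqVneq e0 0; first by exists z0.
have he0 := mO hm0; have heps := mO he.
set d := 1 - (z0 + z0).
have hdO : in_O le v d by apply: (OB H); [exact: (O1 H) | exact: (OD H)].
have hd : uv v d.
  apply/(res_uv S hdO); rewrite /d (resB S (O1 H) (OD H hz0 hz0)) (resD R hz0 hz0) (res1 R).
  have : res e0 = 0 by apply/(resm R he0).
  rewrite /e0 (resB S (OB H (OX H 2 hz0) hz0) heps) (resB S (OX H 2 hz0) hz0) (resX S _ hz0).
  move/(resm R heps): he => ->; rewrite subr0 expr2 -{3}[res z0]mulr1 -mulrBr => /eqP.
  rewrite mulf_eq0 subr_eq0 => /orP [/eqP ->|/eqP ->]; first by rewrite addr0 subr0 oner_neq0.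
  by rewrite opprD addrA subrr sub0r oppr_eq0 oner_neq0.
set del := e0 / d; set z1 := z0 + del.
have hdel : in_O le v del by apply: (O_divu H).
have hz1 : in_O le v z1 by apply: (OD H).
have e1 : z1 ^+ 2 - z1 - eps = del ^+ 2.
  by rewrite /z1 idt -/e0 -/d /del divfK ?(uv_neq0 H hd) // subrr add0r.
have hb1 : forall x, x \in [:: z1] -> in_O le v x by move=> x; rewrite inE => /eqP ->.
have := hmax [:: z1] erefl hb1; rewrite !eT /= -/z0 -/e0 e1.
suff : in_m le v (del ^+ 2 / e0) by move/(cmp_lt H e0n) => /negP.
have -> : del ^+ 2 / e0 = (d ^+ 2)^-1 * e0.
  by rewrite /del expr_div_n mulrAC expr2 mulfK // mulrC.
by apply: (mM S) hm0; apply: (uvO H); apply: (uvV H); apply: (uvX H).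
Qed.


Lemma nonsurj (k : fieldType) (L : seq k) : (forall x, x \in L) ->
  exists beta : k, forall z : k, z ^+ 2 - z != beta.
Proof.
move=> hL; case: (classic (exists beta : k, forall z : k, z ^+ 2 - z != beta)) => // hno.
exfalso; have hs : forall beta : k, exists z : k, z ^+ 2 - z = beta.
  move=> beta; have := not_ex_all_not _ _ hno beta => /not_all_ex_not [z hz].
  by exists z; apply/eqP; apply/negPn/negP.
set U := undup L; set phi := fun z : k => z ^+ 2 - z.
have hU : forall x, x \in U by move=> x; rewrite mem_undup.
have sub : {subset U <= map phi U}.
  by move=> x _; case: (hs x) => z <-; apply: map_f.
have um : uniq (map phi U).
  by apply: (leq_size_uniq (undup_uniq L) sub); rewrite size_map.
have i0 : (index (0%R : k) U < size U)%N by rewrite index_mem.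
have i1 : (index (1%R : k) U < size U)%N by rewrite index_mem.
have := nth_uniq 0 (s := map phi U) (i := index (0%R : k) U) (j := index (1%R : k) U).
rewrite !size_map => /(_ i0 i1 um); rewrite !(nth_map 0) // !nth_index //.
rewrite /phi expr0n /= subr0 expr1n subrr eqxx => /esym /eqP e.
have := congr1 (nth 0 U) e; rewrite !nth_index // => /eqP.
by rewrite eq_sym oner_eq0.
Qed.

Lemma dich (k : eqType) m : (exists C : seq k, uniq C /\ size C = m) \/ (exists L : seq k, forall x, x \in L).
Proof.
elim: m => [|m [[C [uC sC]]|IH]]; [by left; exists [::] | | by right].
case: (classic (exists x, x \notin C)) => [[x hx]|hno].
  by left; exists (x :: C); rewrite /= hx uC sC.
right; exists C => x; apply/negPn/negP => hx; apply: hno; by exists x.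
Qed.

Lemma lift_list (K : fieldType) (G : zmodType) (le : rel G) (v : K -> option G) (k : fieldType) (res : K -> k)
  (S : setting le v res) (L : seq k) :
  exists C : seq K, (forall c, c \in C -> in_O le v c) /\ map res C = L.
Proof.
case: (S) => H R; elim: L => [|a L [C [hC eC]]]; first by exists [::].
case: (resS R a) => c hc ec; exists (c :: C); split; last by rewrite /= ec eC.
by move=> x; rewrite inE => /orP [/eqP -> //|/hC].
Qed.

Unset Implicit Arguments. Set Strict Implicit.

Theorem proposition3p7 (K : fieldType) (G : zmodType) (le : rel G)
  (v : K -> option G) (k : fieldType) (res : K -> k) :
  is_valuation le v ->
  extremal le v ->
  (exists x : K, x != 0 /\ v x <> Some 0) ->
  (forall (g : G) (n : nat), (0 < n)%N -> exists h : G, h *+ n = g) ->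
  is_residue_map le v res ->
  ~ GRing.closed_field_axiom k ->
  ~ exists f : {poly {poly K}},
      [/\ (forall i j, in_O le v (f`_i)`_j),
          (exists s : seq k, forall alpha : k, alpha \notin s ->
             forall z : k,
               (map_poly (fun p : {poly k} => p.[alpha])
                  (map_poly (map_poly res) f)).[z] != 0) &
          (forall eps : K, in_m le v eps ->
             exists2 z : K, in_O le v z &
               (map_poly (fun p : {poly K} => p.[eps]) f).[z] = 0)].
Proof.
move=> Hval Hext Hnt Hd Hres Hnc [f [hf [s hs] hroot]].
have S : setting le v res by split.
have H := Hval; have R := Hres.
have [n [P [n0 hn]]] : exists n (P : nat -> k), (0 < n)%N /\ noroot n P.
  apply: NNPP => hno; apply: Hnc => n P n0.
  apply: NNPP => hx; apply: hno; exists n, P; split => // x; apply/eqP => e; apply: hx.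
  by exists x.
case: (lift_list S [seq P i | i <- iota 0 n]) => pl [hpl epl].
have spl : size pl = n by rewrite -(size_map res) epl size_map size_iota.
pose p := fun i => nth 0 pl i.
have hp : forall i, in_O le v (p i) by exact: (nth_O H hpl).
pose P' := fun i => res (p i).
have hn' : noroot n P'.
  move=> x; have -> : \sum_(i < n) P' i * x ^+ i = \sum_(i < n) P i * x ^+ i.
    apply: eq_bigr => i _; congr (_ * _); rewrite /P' /p -(nth_map 0 0) ?spl //.
    by rewrite epl (nth_map 0) ?size_iota // nth_iota.
  exact: hn.
have hP' : forall i, res (p i) = P' i by [].
case: (nontriv_pi H Hnt) => pi [pi0 hpi].
case: (dich k (size s).+1) => [[C0 [uC sC]]|[L hL]].
- case: (lift_list S C0) => C [hC eC].
  apply: (main_lemma S Hext Hd n0 hp hP' hn' pi0 hpi hf hroot hC).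
  move=> u hu; have hu' := uvO H hu; have ru : res u != 0 by apply/(res_uv S hu').
  have [alpha ha hna] : exists2 alpha, alpha \in [seq c / res u | c <- C0] & alpha \notin s.
    apply: NNPP => hno; have hsub : {subset [seq c / res u | c <- C0] <= s}.
      by move=> x hx; apply/negPn/negP => hx'; apply: hno; exists x.
    have um : uniq [seq c / res u | c <- C0].
      by rewrite map_inj_uniq // => x y; apply: (mulIf (invr_neq0 ru)).
    by have := uniq_leq_size um hsub; rewrite size_map sC ltnn.
  case/mapP: ha => cb hcb eal; rewrite eal in hna; rewrite -eC in hcb; case/mapP: hcb => c hcC ecb.
  exists c => // z hz.
  have hcu : in_O le v (c / u) by apply: (O_divu H) => //; apply: hC.
  case: (horner2_O S hf hcu hz) => h1 h2.
  by apply/(res_uv S h1); rewrite /gev h2 (res_divu S (hC c hcC) hu) -ecb; apply: hs.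
- case: (lift_list S L) => C [hC eC].
  have hroot' : forall eps, in_m le v eps -> exists2 z, in_O le v z & gev (gQ K) eps z = 0.
    by move=> eps he; case: (newton S Hext he) => z hz ez; exists z; rewrite // gevQ.
  apply: (main_lemma S Hext Hd n0 hp hP' hn' pi0 hpi (gQ_O H) hroot' hC).
  move=> u hu; have hu' := uvO H hu; have ru : res u != 0 by apply/(res_uv S hu').
  case: (nonsurj hL) => beta hbeta.
  have : beta * res u \in map res C by rewrite eC hL.
  case/mapP => c hcC ec; exists c => // z hz.
  have hcu : in_O le v (c / u) by apply: (O_divu H) => //; apply: hC.
  rewrite gevQ; have hO : in_O le v (z ^+ 2 - z - c / u).
    by apply: (OB H) => //; apply: (OB H) => //; apply: (OX H).
  have hz2 := OX H 2 hz.
  apply/(res_uv S hO); rewrite (resB S (OB H hz2 hz) hcu) (resB S hz2 hz) (resX S 2 hz).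
  by rewrite (res_divu S (hC c hcC) hu) -ec mulfK // subr_eq0.
Qed.
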